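(* Let $G_1=(g_{kj})$ and $G_2=(g'_{kj})$ be semi-normalized Gram matrices (for tuples of the same type $m,i$), represented by the vectors $V_{G_1},V_{G_2}\in\mathbb H^{t}$. Then $G_1$ and $G_2$ are equivalent (i.e. $G_1=D^*G_2D$ for some nonsingular diagonal quaternionic matrix $D$) if and only if $O_{V_{G_1}}=O_{V_{G_2}}$, where $O_V=\{\bar\mu V\mu:\mu\in\mathrm{Sp}(1)\}$.
   Context: Setting: $m\ge4$, $3\le i\le m$; tuples $p=(p_1,\dots,p_m)$ of distinct points of $\overline{\mathbf H^n_{\mathbb H}}$ with the first $i$ points in $\partial\mathbf H^n_{\mathbb H}$ and the rest in $\mathbf H^n_{\mathbb H}$, where $\mathbb H^{n,1}$ is the right quaternionic space $\mathbb H^{n+1}$ with form $\langle\mathbf z,\mathbf w\rangle=\bar w_{n+1}z_1+\bar w_2z_2+\cdots+\bar w_nz_n+\bar w_1z_{n+1}$. The Gram matrix of a lift $(\mathbf p_1,\dots,\mathbf p_m)$ is $g_{kj}=\langle\mathbf p_j,\mathbf p_k\rangle$; it is semi-normalized if $g_{kk}=0$ for $k\le i$, $g_{kk}=-1$ for $k>i$, $g_{1j}=1$ for $2\le j\le i$, $|g_{23}|=1$, and $g_{1j}=r_{1j}>0$ real for $i<j\le m$. Such a matrix is represented by $V_G=(r_{1(i+1)},\dots,r_{1m},g_{23},g_{24},\dots,g_{2m},g_{34},\dots,g_{3m},\dots,g_{(m-1)m})\in\mathbb H^{t}$, $t=\frac{m^2-m-2i+2}{2}$. $\mathrm{Sp}(1)$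 is the group of unit quaternions, acting on $\mathbb H^t$ componentwise by $V\mapsto\bar\mu V\mu$. *)

(* Defs.v *)
From HB Require Import structures.
From mathcomp Require Import all_boot all_order all_algebra.
From mathcomp Require Import reals.
Set Implicit Arguments. Unset Strict Implicit. Unset Printing Implicit Defensive.
Import Order.TTheory GRing.Theory Num.Theory.
Local Open Scope ring_scope.

(* Real quaternions  a0 + a1 i + a2 j + a3 k  over a real field R. *)
Record quat (R : Type) := Quat { q0 : R; q1 : R; q2 : R; q3 : R }.

Section Quat.
Variable R : realType.

Definition qzero : quat R := Quat 0 0 0 0.
Definition qone : quat R := Quat 1 0 0 0.
Definition qreal (r : R) : quat R := Quat r 0 0 0.
Definition qadd (a b : quat R) : quat R :=
  Quat (q0 a + q0 b) (q1 a + q1 b) (q2 a + q2 b) (q3 a + q3 b).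
Definition qmul (a b : quat R) : quat R :=
  Quat (q0 a * q0 b - q1 a * q1 b - q2 a * q2 b - q3 a * q3 b)
       (q0 a * q1 b + q1 a * q0 b + q2 a * q3 b - q3 a * q2 b)
       (q0 a * q2 b - q1 a * q3 b + q2 a * q0 b + q3 a * q1 b)
       (q0 a * q3 b + q1 a * q2 b - q2 a * q1 b + q3 a * q0 b).
Definition qconj (a : quat R) : quat R := Quat (q0 a) (- q1 a) (- q2 a) (- q3 a).
Definition qnormsq (a : quat R) : R :=
  q0 a ^+ 2 + q1 a ^+ 2 + q2 a ^+ 2 + q3 a ^+ 2.
Definition qsum (s : seq (quat R)) : quat R := foldr qadd qzero s.

(* Vectors of H^{n,1} = H^{n+1} (right quaternionic space), coordinates
   indexed 0..n (paper's z_1 .. z_{n+1}). *)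
Definition qvec (n : nat) := 'I_n.+1 -> quat R.

Definition swap_fl (n : nat) (l : 'I_n.+1) : 'I_n.+1 :=
  if val l == 0%N then (@ord_max n) else if val l == n then (@ord0 n) else l.

Definition hform (n : nat) (z w : qvec n) : quat R :=
  qsum [seq qmul (qconj (w (@swap_fl n l))) (z l) | l <- enum 'I_n.+1].

Definition vzero (n : nat) : qvec n := fun _ => qzero.
Definition vscale (n : nat) (z : qvec n) (lam : quat R) : qvec n :=
  fun l => qmul (z l) lam.

(* z is a lift of a point of the boundary of H^n_H (nonzero null vector) *)
Definition lift_boundary (n : nat) (z : qvec n) : Prop :=
  z <> @vzero n /\ hform (n:=n) z z = qzero.
(* z is a lift of a point of H^n_H (negative vector) *)
Definition lift_interior (n : nat) (z : qvec n) : Prop :=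
  exists x : R, x < 0 /\ hform (n:=n) z z = qreal x.

(* (p_1,...,p_m) is a lift of a tuple of distinct points of the closure of
   H^n_H, the first i of them on the boundary, the remaining ones inside. *)
Definition lifted_tuple (n m i : nat) (p : 'I_m -> qvec n) : Prop :=
  (forall k : 'I_m, (val k < i)%N -> lift_boundary (p k)) /\
  (forall k : 'I_m, (i <= val k)%N -> lift_interior (p k)) /\
  (forall k j : 'I_m, k <> j -> ~ exists lam : quat R, p k = vscale (p j) lam).

Definition gram (n m : nat) (p : 'I_m -> qvec n) : 'I_m -> 'I_m -> quat R :=
  fun k j => hform (p j) (p k).

(* semi-normalization conditions (indices shifted to start at 0) *)
Definition semi_normalized (m i : nat) (G : 'I_m -> 'I_m -> quat R) : Prop :=
  (forall k : 'I_m, (val k < i)%N -> G k k = qzero) /\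
  (forall k : 'I_m, (i <= val k)%N -> G k k = qreal (-1)) /\
  (forall k j : 'I_m, val k = 0%N -> (1 <= val j < i)%N -> G k j = qone) /\
  (forall k j : 'I_m, val k = 1%N -> val j = 2%N -> qnormsq (G k j) = 1) /\
  (forall k j : 'I_m, val k = 0%N -> (i <= val j)%N ->
       exists r : R, 0 < r /\ G k j = qreal r).

Definition semi_normalized_gram (n m i : nat) (G : 'I_m -> 'I_m -> quat R) :
    Prop :=
  exists p : 'I_m -> qvec n, @lifted_tuple n m i p /\
    (forall k j, G k j = @gram n m p k j) /\ @semi_normalized m i G.

(* V_G = (r_{1(i+1)},...,r_{1m}, g_{23},...,g_{2m}, g_{34},...,g_{(m-1)m}):
   row-major list of the entries (k,j) with k = 1, j > i, or 2 <= k < j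
   (1-based), i.e. 0-based: k = 0, j >= i, or 1 <= k < j. *)
Definition VG (m i : nat) (G : 'I_m -> 'I_m -> quat R) : seq (quat R) :=
  flatten [seq [seq G k j | j <- enum 'I_m &
                   ((val k == 0%N) && (i <= val j)%N)
                   || ((0 < val k)%N && (val k < val j)%N)]
          | k <- enum 'I_m].

Definition sp1_orbit (V : seq (quat R)) : seq (quat R) -> Prop :=
  fun W => exists mu : quat R, qnormsq mu = 1 /\
    W = [seq qmul (qmul (qconj mu) v) mu | v <- V].

Definition gram_equiv (m : nat) (G1 G2 : 'I_m -> 'I_m -> quat R) : Prop :=
  exists d : 'I_m -> quat R, (forall k, d k <> qzero) /\
    forall k j, G1 k j = qmul (qmul (qconj (d k)) (G2 k j)) (d j).

End Quat.

(* Main.v *)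
Require Import Defs.
From HB Require Import structures.
From mathcomp Require Import all_boot all_order all_algebra.
From mathcomp Require Import reals.
From mathcomp Require Import ring lra zify.
From Stdlib Require Import FunctionalExtensionality PropExtensionality.
Local Open Scope ring_scope.
Import Order.TTheory GRing.Theory Num.Theory.

Set Implicit Arguments.
Section Helpers.
Variable R : realType.
Implicit Types a b c mu nu v : quat R.

Lemma quatE a b : q0 a = q0 b -> q1 a = q1 b -> q2 a = q2 b -> q3 a = q3 b -> a = b.
Proof. by case: a; case: b => /= ???? ???? -> -> -> ->. Qed.

Lemma qmulA a b c : qmul (qmul a b) c = qmul a (qmul b c).
Proof. case: a b c => ???? [????] [????]; apply: quatE => /=; ring. Qed.

Lemma qconjM a b : qconj (qmul a b) = qmul (qconj b) (qconj a).
Proof. case: a b => ???? [????]; apply: quatE => /=; ring. Qed.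

Lemma qconjK a : qconj (qconj a) = a.
Proof. case: a => ????; apply: quatE => /=; ring. Qed.

Lemma qnormM a b : qnormsq (qmul a b) = qnormsq a * qnormsq b.
Proof. case: a b => ???? [????]; rewrite /qnormsq /=; ring. Qed.

Lemma qnormC a : qnormsq (qconj a) = qnormsq a.
Proof. case: a => ????; rewrite /qnormsq /=; ring. Qed.

Lemma qnorm_real (r : R) : qnormsq (qreal r) = r ^+ 2.
Proof. rewrite /qnormsq /=; ring. Qed.

Lemma qnorm_one : qnormsq (qone R) = 1.
Proof. rewrite /qnormsq /=; ring. Qed.

Lemma qnorm_zero : qnormsq (qzero R) = 0.
Proof. rewrite /qnormsq /=; ring. Qed.

Lemma qnorm_ge0 a : 0 <= qnormsq a.
Proof. rewrite /qnormsq; by rewrite !addr_ge0 ?sqr_ge0. Qed.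

Lemma qmulCl a : qmul (qconj a) a = qreal (qnormsq a).
Proof. case: a => ????; rewrite /qnormsq; apply: quatE => /=; ring. Qed.

Lemma qmulCr a : qmul a (qconj a) = qreal (qnormsq a).
Proof. case: a => ????; rewrite /qnormsq; apply: quatE => /=; ring. Qed.

Lemma qmul1q a : qmul (qone R) a = a.
Proof. case: a => ????; apply: quatE => /=; ring. Qed.

Lemma qmulq1 a : qmul a (qone R) = a.
Proof. case: a => ????; apply: quatE => /=; ring. Qed.

Lemma qmul_realC (r : R) a : qmul a (qreal r) = qmul (qreal r) a.
Proof. case: a => ????; apply: quatE => /=; ring. Qed.

Lemma qmul_real (r s : R) : qmul (qreal r) (qreal s) = qreal (r * s).
Proof. apply: quatE => /=; ring. Qed.

Lemma qreal1 : qreal 1 = qone R.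
Proof. by []. Qed.

Lemma qconj_real (r : R) : qconj (qreal r) = qreal r.
Proof. apply: quatE => //=; ring. Qed.

Lemma unit_eq a b : qnormsq a = 1 -> qmul (qconj a) b = qone R -> b = a.
Proof.
move=> Na H.
by rewrite -[b]qmul1q -qreal1 -Na -qmulCr qmulA H qmulq1.
Qed.

Lemma sq1 (x : R) : 0 <= x -> x * x = 1 -> x = 1.
Proof.
move=> x0 H.
have: (x - 1) * (x + 1) = 0.
  have ->: (x - 1) * (x + 1) = x * x - 1 by ring.
  by rewrite H subrr.
move/eqP; rewrite mulf_eq0 => /orP [/eqP|/eqP]; first by move/eqP; rewrite subr_eq0 => /eqP.
move=> h; exfalso; have: 0 < x + 1 by lra. by rewrite h ltxx.
Qed.

Definition act mu v := qmul (qmul (qconj mu) v) mu.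

Lemma act_comp mu nu v : act nu (act mu v) = act (qmul mu nu) v.
Proof. by rewrite /act qconjM !qmulA. Qed.

Lemma act_real mu (r : R) : qnormsq mu = 1 -> act mu (qreal r) = qreal r.
Proof.
move=> N; rewrite /act qmul_realC qmulA qmulCl N qreal1 qmulq1 //.
Qed.

Lemma act_zero mu : act mu (qzero R) = qzero R.
Proof. case: mu => ????; apply: quatE => /=; ring. Qed.

Lemma act_conj mu v : qconj (act mu v) = act mu (qconj v).
Proof. by rewrite /act !qconjM qconjK !qmulA. Qed.

Lemma act1 v : act (qone R) v = v.
Proof. case: v => ????; apply: quatE => /=; ring. Qed.

Lemma orbit_map mu (V : seq (quat R)) : qnormsq mu = 1 ->
  sp1_orbit (map (act mu) V) = sp1_orbit V.
Proof.
move=> N; apply: functional_extensionality => W; apply: propositional_extensionality.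
split=> [[nu [Nn ->]]|[nu [Nn ->]]].
- exists (qmul mu nu); split; first by rewrite qnormM N Nn mulr1.
  rewrite -map_comp; apply: eq_map => v /=. exact: (act_comp mu nu v).
- exists (qmul (qconj mu) nu); split; first by rewrite qnormM qnormC N Nn mulr1.
  rewrite -map_comp; apply: eq_map => v /=.
  have -> : qmul (qmul (qconj (qmul (qconj mu) nu)) (qmul (qmul (qconj mu) v) mu))
     (qmul (qconj mu) nu) = act (qmul (qconj mu) nu) (act mu v) by [].
  by rewrite act_comp -qmulA qmulCr N qreal1 qmul1q.
Qed.

Lemma VG_map m i (A : 'I_m -> 'I_m -> quat R) (f : quat R -> quat R) :
  VG i (fun k j => f (A k j)) = map f (VG i A).
Proof.
rewrite /VG map_flatten -map_comp; congr flatten; apply: eq_map => k /=.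
by rewrite -map_comp.
Qed.

Lemma flatten_inj (T : eqType) U (s : seq T) (F1 F2 : T -> seq U) :
  (forall k, size (F1 k) = size (F2 k)) ->
  flatten (map F1 s) = flatten (map F2 s) -> forall k, k \in s -> F1 k = F2 k.
Proof.
move=> Hs; elim: s => [//|x s IH] /= H k.
have e1 : F1 x = F2 x.
  by have := congr1 (take (size (F1 x))) H; rewrite !take_size_cat.
have e2 : flatten (map F1 s) = flatten (map F2 s).
  by have := congr1 (drop (size (F1 x))) H; rewrite !drop_size_cat.
rewrite in_cons => /orP [/eqP -> //|]; exact: IH.
Qed.

Lemma VG_entry m i (A B : 'I_m -> 'I_m -> quat R) : VG i A = VG i B ->
  forall k j : 'I_m, ((val k == 0%N) && (i <= val j)%N)
                   || ((0 < val k)%N && (val k < val j)%N) -> A k j = B k j.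
Proof.
move=> H k j Hs.
pose P (k j : 'I_m) := ((val k == 0%N) && (i <= val j)%N)
                   || ((0 < val k)%N && (val k < val j)%N).
have E := @flatten_inj _ _ (enum 'I_m)
  (fun k => [seq A k j | j <- enum 'I_m & P k j])
  (fun k => [seq B k j | j <- enum 'I_m & P k j])
  (fun k => ltac:(by rewrite !size_map)) H k (mem_enum _ k).
apply: ((eq_in_map _ _ _).2 E j).
by rewrite mem_filter mem_enum andbT.
Qed.

Lemma val_swap n (l : 'I_n.+1) : val (swap_fl l) = if val l == 0%N then n else if val l == n then 0%N else val l.
Proof. by rewrite /swap_fl; case: ifP => //; case: ifP. Qed.
Lemma swapK n : involutive (@swap_fl n).
Proof.
move=> l; apply: val_inj; rewrite !val_swap.
have ln := ltn_ord l.
case: (eqVneq (val l) 0%N) => [->|h0].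
  by case: (eqVneq n 0%N) => [->//|hn]; rewrite eqxx.
case: (eqVneq (val l) n) => [hn'|hn].
  by rewrite -{1 2}hn' ?(negbTE h0) eqxx /= ?(negbTE h0) ?eqxx /=; rewrite hn'.
by rewrite (negbTE h0) (negbTE hn).
Qed.

Lemma qsum0 (s : seq (quat R)) : q0 (qsum s) = \sum_(x <- s) q0 x.
Proof. by elim: s => [|x s IH]; rewrite ?big_nil ?big_cons //= IH. Qed.
Lemma qsum1 (s : seq (quat R)) : q1 (qsum s) = \sum_(x <- s) q1 x.
Proof. by elim: s => [|x s IH]; rewrite ?big_nil ?big_cons //= IH. Qed.
Lemma qsum2 (s : seq (quat R)) : q2 (qsum s) = \sum_(x <- s) q2 x.
Proof. by elim: s => [|x s IH]; rewrite ?big_nil ?big_cons //= IH. Qed.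
Lemma qsum3 (s : seq (quat R)) : q3 (qsum s) = \sum_(x <- s) q3 x.
Proof. by elim: s => [|x s IH]; rewrite ?big_nil ?big_cons //= IH. Qed.

Lemma sum_swap n (H : 'I_n.+1 -> R) :
  \sum_(l <- enum 'I_n.+1) H (swap_fl l) = \sum_(l <- enum 'I_n.+1) H l.
Proof.
rewrite -(big_map (@swap_fl n) xpredT H); apply: perm_big.
have inj : injective (@swap_fl n) by apply: can_inj (@swapK n).
apply: uniq_perm; first by rewrite (map_inj_uniq inj) enum_uniq.
  exact: enum_uniq.
by move=> x; rewrite -{1}[x]swapK mem_map // !mem_enum.
Qed.

Lemma qconj_mulC a b : qconj (qmul (qconj a) b) = qmul (qconj b) a.
Proof. by rewrite qconjM qconjK. Qed.

Lemma hform_herm n (z w : qvec R n) : hform z w = qconj (hform w z).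
Proof.
rewrite /hform.
set F := fun l => qmul (qconj (w (swap_fl l))) (z l).
set Gf := fun l => qmul (qconj (z (swap_fl l))) (w l).
have FG : forall l, F l = qconj (Gf (swap_fl l)).
  by move=> l; rewrite /F /Gf swapK qconj_mulC.
apply: quatE => /=.
- rewrite qsum0 qsum0 !big_map; under eq_bigr do rewrite FG.
  rewrite -enumT -(@sum_swap n (fun l => q0 (Gf l))).
  by apply: eq_bigr.
- rewrite qsum1 qsum1 !big_map -sumrN; under eq_bigr do rewrite FG.
  rewrite -enumT -(@sum_swap n (fun l => - q1 (Gf l))).
  by apply: eq_bigr.
- rewrite qsum2 qsum2 !big_map -sumrN; under eq_bigr do rewrite FG.
  rewrite -enumT -(@sum_swap n (fun l => - q2 (Gf l))).
  by apply: eq_bigr.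
- rewrite qsum3 qsum3 !big_map -sumrN; under eq_bigr do rewrite FG.
  rewrite -enumT -(@sum_swap n (fun l => - q3 (Gf l))).
  by apply: eq_bigr.
Qed.

End Helpers.
Unset Implicit Arguments.

Arguments act {R}.
Theorem lemma8p7 (R : realType) (n m i : nat) (hn : (0 < n)%N)
    (hm : (4 <= m)%N) (hi : (3 <= i <= m)%N)
    (G1 G2 : 'I_m -> 'I_m -> quat R) :
  semi_normalized_gram n i G1 -> semi_normalized_gram n i G2 ->
  (gram_equiv G1 G2 <-> sp1_orbit (VG i G1) = sp1_orbit (VG i G2)).
Proof.
move=> [p1 [LT1 [Gp1 SN1]]] [p2 [LT2 [Gp2 SN2]]].
have herm1 : forall k j, G1 k j = qconj (G1 j k).
  by move=> k j; rewrite !Gp1 /gram hform_herm.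
have herm2 : forall k j, G2 k j = qconj (G2 j k).
  by move=> k j; rewrite !Gp2 /gram hform_herm.
case: SN1 => [A1 [B1 [C1 [D1 E1]]]].
case: SN2 => [A2 [B2 [C2 [D2 E2]]]].
move: hi => /andP [hi3 him].
have m0 : (0 < m)%N by lia.
have m1 : (1 < m)%N by lia.
have m2 : (2 < m)%N by lia.
pose o0 := Ordinal m0. pose o1 := Ordinal m1. pose o2 := Ordinal m2.
split.
- case=> d [dnz hd].
  pose mu := d o0.
  have row0 : forall k : 'I_m, (1 <= val k < i)%N -> qmul (qconj mu) (d k) = qone R.
    move=> k hk; have := hd o0 k.
    rewrite (C1 o0 k erefl hk) (C2 o0 k erefl hk) qmulq1 => H.
    exact: esym H.
  have h1 : (1 <= val o1 < i)%N by rewrite /=; lia.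
  have h2 : (1 <= val o2 < i)%N by rewrite /=; lia.
  have ab : qnormsq mu * qnormsq (d o1) = 1.
    by have := congr1 (@qnormsq R) (row0 o1 h1); rewrite qnormM qnormC qnorm_one.
  have ac : qnormsq mu * qnormsq (d o2) = 1.
    by have := congr1 (@qnormsq R) (row0 o2 h2); rewrite qnormM qnormC qnorm_one.
  have bc : qnormsq (d o1) * qnormsq (d o2) = 1.
    have := congr1 (@qnormsq R) (hd o1 o2).
    by rewrite !qnormM qnormC (D1 o1 o2 erefl erefl) (D2 o1 o2 erefl erefl) mulr1 => <-.
  have Na : qnormsq mu = 1.
    apply: sq1; first exact: qnorm_ge0.
    rewrite -[LHS]mulr1 -bc.
    have -> : qnormsq mu * qnormsq mu * (qnormsq (d o1) * qnormsq (d o2))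
       = (qnormsq mu * qnormsq (d o1)) * (qnormsq mu * qnormsq (d o2)) by ring.
    by rewrite ab ac mulr1.
  have dk : forall k, d k = mu.
    move=> k; case: (ltnP (val k) i) => hk.
      case: (eqVneq (val k) 0%N) => [k0|k0].
        by have -> : k = o0 by apply: val_inj.
      apply: (unit_eq Na (row0 k _)); lia.
    have Nk : qnormsq (d k) = 1.
      have := congr1 (@qnormsq R) (hd k k).
      rewrite (B1 k hk) (B2 k hk) !qnormM qnormC !qnorm_real sqrrN expr1n mulr1 => H.
      by apply: sq1; [exact: qnorm_ge0 | rewrite -H].
    have [r1 [r1p e1]] := E1 o0 k erefl hk.
    have [r2 [r2p e2]] := E2 o0 k erefl hk.
    have H := hd o0 k; rewrite e1 e2 in H.
    have r12 : r1 = r2.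
      have := congr1 (@qnormsq R) H.
      rewrite !qnormM qnormC !qnorm_real Na Nk mul1r mulr1 => /eqP.
      by rewrite eqrXn2 // ?ltW // => /eqP.
    rewrite r12 qmul_realC qmulA in H.
    have H2 := congr1 (qmul (qreal r2^-1)) H.
    rewrite -qmulA !qmul_real mulVf ?gt_eqF // qreal1 qmul1q in H2.
    exact: (unit_eq Na (esym H2)).
  have HG : G1 = fun k j => act mu (G2 k j).
    apply: functional_extensionality => k; apply: functional_extensionality => j.
    by rewrite hd !dk.
  by rewrite HG VG_map orbit_map.
- move=> HO.
  have : sp1_orbit (VG i G1) (VG i G1).
    exists (qone R); split; first exact: qnorm_one.
    have E := eq_map (@act1 R) (VG i G1).
    exact: esym (etrans E (map_id _)).
  rewrite HO => -[mu [Nm Emu]].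
  change (VG i G1 = map (act mu) (VG i G2)) in Emu.
  rewrite -VG_map in Emu.
  have Hsel := @VG_entry R m i _ _ Emu.
  have up : forall k j : 'I_m, (val k <= val j)%N -> G1 k j = act mu (G2 k j).
    move=> k j kj.
    case: (eqVneq k j) => [<-|kj'].
      case: (ltnP (val k) i) => hk.
        by rewrite (A1 k hk) (A2 k hk) act_zero.
      by rewrite (B1 k hk) (B2 k hk) act_real.
    have kj2 : (val k < val j)%N.
      by rewrite ltn_neqAle kj andbT; apply: contra kj' => /eqP h; apply/eqP/val_inj.
    case: (eqVneq (val k) 0%N) => [k0|k0].
      case: (ltnP (val j) i) => hj.
        have hj' : (1 <= val j < i)%N by lia.
        rewrite (C1 k j k0 hj') (C2 k j k0 hj').
        by have := @act_real R mu 1 Nm; rewrite qreal1 => ->.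
      by apply: Hsel; rewrite k0 hj.
    apply: Hsel; apply/orP; right; apply/andP; split => //; lia.
  exists (fun _ => mu); split.
    move=> _ h; move: Nm; rewrite h qnorm_zero => /eqP.
    by rewrite eq_sym oner_eq0.
  move=> k j; case: (leqP (val k) (val j)) => h; first exact: up.
  by rewrite (herm1 k j) (up j k (ltnW h)) act_conj -(herm2 k j).
Qed.
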